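(* Let $G$ be a red-blue colouring of $K_n$, let $u \in V(G)$, and let $A_1, \ldots, A_5$ be pairwise disjoint non-empty subsets of $V(G) \setminus \{u\}$ such that $(A_1, \ldots, A_5)$ is a pentagon blow-up in $G$. Suppose that there are $t$ pairwise disjoint bad configurations in $(A_1,\dots,A_5)$ with respect to $u$, but no $t+1$ pairwise disjoint such bad configurations, where $t < \min_{i \in [5]} |A_i|$. Then there exists $i \in [5]$ such that $(A_i \cup \{u\}, A_{i+1}, \ldots, A_{i+4})$ is exactly $t$ edge-flips away from a pentagon blow-up.
   Context: A red-blue colouring of $K_n$ assigns red or blue to each edge of the complete graph on the $n$-vertex set $V(G)$. For pairwise disjoint non-empty sets $B_1,\dots,B_5 \subseteq V(G)$, $(B_1,\dots,B_5)$ is a pentagon blow-up if for every $i \in [5]$ all edges between $B_i$ and $B_{i+1}$ are red and all edges between $B_i$ and $B_{i+2}$ are blue (indices modulo 5); it is exactly $t$ edge-flips away from a pentagon blow-up if exactly $t$ of the edges between distinct sets $B_i, B_j$ have a colour different from the one required by this condition (so changing the colours of these $t$ edges makes it a pentagon blow-up). For $u \notin A_1\cup\dots\cup A_5$, a bad configuration in $(A_1,\dots,A_5)$ with respect to $u$ is either a set of three red neighbours of $u$, one from each of $A_i, A_{i+2}, A_{i+3}$ for some $i \in [5]$, or a set of three blue neighbours of $u$, one from each of $A_i, A_{i+1}, A_{i+2}$ for some $i \in [5]$. *)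

(* Defs.v *)
From mathcomp Require Import all_boot.
Set Implicit Arguments. Unset Strict Implicit. Unset Printing Implicit Defensive.

Definition ish (i : 'I_5) (k : nat) : 'I_5 :=
  Ordinal (ltn_pmod (i + k) (isT : 0 < 5)).

Section Pentagon.
Variable T : finType.
(* A red-blue colouring of the complete graph on T: [red x y] = true means
   the edge xy (x <> y) is red, false means blue.  Symmetry is assumed
   separately in the theorem. *)
Variable red : T -> T -> bool.

Definition disjoint_nonempty (B : 'I_5 -> {set T}) : Prop :=
  (forall i, B i != set0) /\
  (forall i j, i != j -> [disjoint B i & B j]).

Definition pentagon_blowup (B : 'I_5 -> {set T}) : Prop :=
  disjoint_nonempty B /\
  forall i : 'I_5,
    (forall x y, x \in B i -> y \in B (ish i 1) -> red x y) /\
    (forall x y, x \in B i -> y \in B (ish i 2) -> ~~ red x y).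

(* Every
   unordered pair of distinct parts {B_i, B_j} is of the form {B_i, B_(i+1)}
   or {B_i, B_(i+2)} for exactly one ordered choice, so each edge is counted
   exactly once. *)
Definition nb_wrong (B : 'I_5 -> {set T}) : nat :=
  \sum_(i < 5)
    (#|[set p in setX (B i) (B (ish i 1)) | ~~ red p.1 p.2]|
     + #|[set p in setX (B i) (B (ish i 2)) | red p.1 p.2]|).

Definition exactly_flips_away (B : 'I_5 -> {set T}) (t : nat) : Prop :=
  disjoint_nonempty B /\ nb_wrong B = t.

Definition bad_config (A : 'I_5 -> {set T}) (u : T) (S : {set T}) : Prop :=
  exists (i : 'I_5) (a b c : T), S = [set a; b; c] /\
   ((a \in A i /\ b \in A (ish i 2) /\ c \in A (ish i 3) /\
     red u a /\ red u b /\ red u c)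
 \/ (a \in A i /\ b \in A (ish i 1) /\ c \in A (ish i 2) /\
     ~~ red u a /\ ~~ red u b /\ ~~ red u c)).

Definition has_disjoint_bad (A : 'I_5 -> {set T}) (u : T) (k : nat) : Prop :=
  exists P : {set {set T}},
    #|P| = k /\ trivIset P /\ (forall S, S \in P -> bad_config A u S).

End Pentagon.

(* Main.v *)
Require Import Defs.
From mathcomp Require Import all_boot.
From mathcomp Require Import zify.
From Stdlib Require Import Classical.
Set Implicit Arguments. Unset Strict Implicit. Unset Printing Implicit Defensive.

Ltac spec_all :=
  repeat match goal with
  | H : is_true (0 < S _) /\ is_true (0 < S _) /\ is_true (0 < S _) -> _ |- _ =>
      specialize (H (conj isT (conj isT isT)))
  | H : is_true (0 < 0) /\ _ -> _ |- _ => clear H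
  | H : _ /\ is_true (0 < 0) /\ _ -> _ |- _ => clear H
  | H : _ /\ _ /\ is_true (0 < 0) -> _ |- _ => clear H
  end.
Lemma step (r0 r1 r2 r3 r4 b0 b1 b2 b3 b4 s : nat) :
  1 <= s ->
  s <= r0 + b0 -> s <= r1 + b1 -> s <= r2 + b2 -> s <= r3 + b3 -> s <= r4 + b4 ->
  s <= r2 + r3 + b1 + b4 ->
  s <= r3 + r4 + b2 + b0 ->
  s <= r4 + r0 + b3 + b1 ->
  s <= r0 + r1 + b4 + b2 ->
  s <= r1 + r2 + b0 + b3 ->
  ((0 < r0 /\ 0 < r2 /\ 0 < r3) -> r2 + r3 + b1 + b4 <= s) ->
  ((0 < r1 /\ 0 < r3 /\ 0 < r4) -> r3 + r4 + b2 + b0 <= s) ->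
  ((0 < r2 /\ 0 < r4 /\ 0 < r0) -> r4 + r0 + b3 + b1 <= s) ->
  ((0 < r3 /\ 0 < r0 /\ 0 < r1) -> r0 + r1 + b4 + b2 <= s) ->
  ((0 < r4 /\ 0 < r1 /\ 0 < r2) -> r1 + r2 + b0 + b3 <= s) ->
  ((0 < b0 /\ 0 < b1 /\ 0 < b2) -> r3 + r4 + b2 + b0 <= s) ->
  ((0 < b1 /\ 0 < b2 /\ 0 < b3) -> r4 + r0 + b3 + b1 <= s) ->
  ((0 < b2 /\ 0 < b3 /\ 0 < b4) -> r0 + r1 + b4 + b2 <= s) ->
  ((0 < b3 /\ 0 < b4 /\ 0 < b0) -> r1 + r2 + b0 + b3 <= s) ->
  ((0 < b4 /\ 0 < b0 /\ 0 < b1) -> r2 + r3 + b1 + b4 <= s) ->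
  False.
Proof.
intros.
destruct r0; destruct r1; destruct r2; destruct r3; destruct r4;
 destruct b0; destruct b1; destruct b2; destruct b3; destruct b4; spec_all; lia.
Qed.

Section Aux.
Variable T : finType.
Variable red : T -> T -> bool.
Variable u : T.

Definition Ai (A : 'I_5 -> {set T}) (n : nat) : {set T} := A (inord (n %% 5)).
Definition cnt (A : 'I_5 -> {set T}) (p : T -> bool) (n : nat) := #|[set x in Ai A n | p x]|.
Definition rc A n := cnt A (red u) n.
Definition bc A n := cnt A (fun x => ~~ red u x) n.
Definition FA A n := rc A n.+2 + rc A n.+3 + bc A n.+1 + bc A n.+4.
Definition disjA (A : 'I_5 -> {set T}) := forall i j : 'I_5, i != j -> [disjoint A i & A j].
Arguments Ai : simpl never.
Arguments cnt : simpl never.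
Arguments rc : simpl never.
Arguments bc : simpl never.

Lemma mydisj (X Y : {set T}) : (forall x, x \in X -> x \in Y -> False) -> [disjoint X & Y].
Proof.
move=> H; rewrite -setI_eq0; apply/eqP/setP => x; rewrite !inE.
by apply/negP => /andP [] /H H1 /H1.
Qed.

Lemma Ai_eq A m n : m %% 5 = n %% 5 -> Ai A m = Ai A n.
Proof. by rewrite /Ai => ->. Qed.

Lemma Ai_ord A (i : 'I_5) : A i = Ai A i.
Proof. rewrite /Ai; congr A; apply: val_inj; rewrite /= inordK modn_small //; lia. Qed.

Lemma Ai_ish A (i : 'I_5) k : A (ish i k) = Ai A (i + k).
Proof. rewrite /Ai; congr A; apply: val_inj; rewrite /= inordK ?ltn_pmod //. Qed.

Lemma Ai_disj A m n : disjA A -> m %% 5 != n %% 5 -> [disjoint Ai A m & Ai A n].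
Proof.
move=> HA Hmn; apply: HA; apply/negP => /eqP /(congr1 val) /=.
rewrite !inordK ?ltn_pmod // => E; by rewrite E eqxx in Hmn.
Qed.

Lemma Ai_mem A m n x : disjA A -> x \in Ai A m -> (x \in Ai A n) = (m %% 5 == n %% 5).
Proof.
move=> HA Hx; case: eqP => E; first by rewrite -(Ai_eq A E).
apply: (disjointFr (Ai_disj HA (introN eqP E))) Hx.
Qed.

Lemma card_rb A n : #|Ai A n| = rc A n + bc A n.
Proof.
rewrite /rc /bc /cnt -(cardsID [set x | red u x] (Ai A n)).
congr (_ + _); apply: eq_card => x; by rewrite !inE andbC.
Qed.

Lemma cardI_U1 (X Y : {set T}) a : a \notin Y -> #|X :&: (a |: Y)| = (a \in X) + #|X :&: Y|.
Proof.
move=> aY; case aX: (a \in X).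
  have -> : X :&: (a |: Y) = a |: (X :&: Y).
    apply/setP => x; rewrite !inE; case: eqP => [->|] //=; by rewrite aX.
  by rewrite cardsU1 inE (negbTE aY) andbF.
have -> : X :&: (a |: Y) = X :&: Y.
  apply/setP => x; rewrite !inE; case: eqP => [->|] //=; by rewrite aX.
by [].
Qed.

Lemma card3 (X : {set T}) a b c : a != b -> a != c -> b != c ->
  #|X :&: [set a; b; c]| = (a \in X) + (b \in X) + (c \in X).
Proof.
move=> ab ac bc'.
have -> : [set a; b; c] = a |: (b |: (c |: set0)).
  apply/setP => x; rewrite !inE; by rewrite orbF orbA.
rewrite cardI_U1; last by rewrite !inE !orbF negb_or ab ac.
rewrite cardI_U1; last by rewrite !inE orbF.
rewrite cardI_U1; last by rewrite inE.
by rewrite setI0 cards0 addn0 addnA.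
Qed.


Lemma cnt_rm A (p : T -> bool) a b c ma mb mc n : disjA A ->
  a \in Ai A ma -> b \in Ai A mb -> c \in Ai A mc ->
  ma %% 5 != mb %% 5 -> ma %% 5 != mc %% 5 -> mb %% 5 != mc %% 5 ->
  cnt A p n = cnt (fun k => A k :\: [set a; b; c]) p n + (p a && (ma %% 5 == n %% 5))
     + (p b && (mb %% 5 == n %% 5)) + (p c && (mc %% 5 == n %% 5)).
Proof.
move=> HA Ha Hb Hc Hab Hac Hbc.
rewrite /cnt.
set X := [set x in Ai A n | p x].
have -> : [set x in Ai (fun k => A k :\: [set a; b; c]) n | p x] = X :\: [set a; b; c].
  by apply/setP => x; rewrite /Ai !inE; case: (p x); rewrite ?andbT ?andbF.
rewrite -(cardsID [set a; b; c] X) card3; first last.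
- apply/negP => /eqP E; move: Hc; rewrite -E (Ai_mem _ HA Hb) => Hc'.
  by move: Hbc; rewrite (eqP Hc') eqxx.
- apply/negP => /eqP E; move: Hc; rewrite -E (Ai_mem _ HA Ha) => Hc'.
  by move: Hac; rewrite (eqP Hc') eqxx.
- apply/negP => /eqP E; move: Hb; rewrite -E (Ai_mem _ HA Ha) => Hb'.
  by move: Hab; rewrite (eqP Hb') eqxx.
rewrite /X !inE !(Ai_mem _ HA Ha) !(Ai_mem _ HA Hb) !(Ai_mem _ HA Hc).
rewrite (andbC (p a)) (andbC (p b)) (andbC (p c)).
lia.
Qed.

Lemma bad_sub A S x : bad_config red A u S -> x \in S -> exists k, x \in A k.
Proof.
move=> [i [a [b [c [-> H]]]]]; rewrite !inE => /orP [/orP [] | ] /eqP ->;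
  case: H => [[? [? [? _]]] | [? [? [? _]]]]; eauto.
Qed.

Lemma bad_mono (A A' : 'I_5 -> {set T}) S : (forall k, A' k \subset A k) ->
  bad_config red A' u S -> bad_config red A u S.
Proof.
move=> sub [i [a [b [c [-> H]]]]]; exists i, a, b, c; split => //.
case: H => [[Ha [Hb [Hc H]]] | [Ha [Hb [Hc H]]]]; [left | right];
  (split; [exact: (subsetP (sub _)) | split; [exact: (subsetP (sub _)) | split; [exact: (subsetP (sub _)) | exact H]]]).
Qed.

Lemma bad_nonempty A S : bad_config red A u S -> S != set0.
Proof.
move=> [i [a [b [c [-> H]]]]]; apply/set0Pn; exists a; by rewrite !inE eqxx.
Qed.

Lemma ext_fam A S s : bad_config red A u S ->
  has_disjoint_bad red (fun k => A k :\: S) u s -> has_disjoint_bad red A u s.+1.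
Proof.
move=> HS [P [cP [tP bP]]].
have dis : {in P, forall B : {set T}, [disjoint S & B]}.
  move=> B HB; apply: mydisj => x xS xB.
  have [k Hk] := bad_sub (bP _ HB) xB.
  by move: Hk; rewrite inE xS.
have n0 : set0 \notin P.
  by apply/negP => /bP /bad_nonempty; rewrite eqxx.
have [tP' nSP] := trivIsetU1 dis tP n0.
exists (S |: P); split; first by rewrite cardsU1 nSP cP.
split => // B; rewrite !inE => /orP [/eqP -> // | /bP].
apply: bad_mono => k; exact: subsetDl.
Qed.


Definition ind (ma mb mc m : nat) : nat :=
  (ma %% 5 == m %% 5) + (mb %% 5 == m %% 5) + (mc %% 5 == m %% 5).

Definition IHprop s := forall A', disjA A' -> (forall n, n < 5 -> s <= #|Ai A' n|) ->
  (forall n, n < 5 -> s <= FA A' n) -> has_disjoint_bad red A' u s.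

Lemma gen_case A s ma mb mc (col : bool) : disjA A -> IHprop s ->
  0 < cnt A (fun x => red u x == col) ma -> 0 < cnt A (fun x => red u x == col) mb ->
  0 < cnt A (fun x => red u x == col) mc ->
  ma %% 5 != mb %% 5 -> ma %% 5 != mc %% 5 -> mb %% 5 != mc %% 5 ->
  (forall a b c, a \in Ai A ma -> b \in Ai A mb -> c \in Ai A mc ->
     red u a = col -> red u b = col -> red u c = col -> bad_config red A u [set a; b; c]) ->
  (forall n, n < 5 -> s.+1 <= #|Ai A n|) ->
  (forall n, n < 5 -> s + (if col then ind ma mb mc n.+2 + ind ma mb mc n.+3
                           else ind ma mb mc n.+1 + ind ma mb mc n.+4) <= FA A n) ->
  has_disjoint_bad red A u s.+1.
Proof.
move=> HA IH pa pb pc dab dac dbc Hbad Hsz HF.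
case/card_gt0P: pa => a; rewrite inE => /andP [Ha /eqP ra].
case/card_gt0P: pb => b; rewrite inE => /andP [Hb /eqP rb].
case/card_gt0P: pc => c; rewrite inE => /andP [Hc /eqP rc'].
apply: (ext_fam (Hbad _ _ _ Ha Hb Hc ra rb rc')).
set A' := fun k => A k :\: [set a; b; c].
have ER : forall n, rc A n = rc A' n + (col && (ma %% 5 == n %% 5))
     + (col && (mb %% 5 == n %% 5)) + (col && (mc %% 5 == n %% 5)).
  by move=> n; rewrite /rc (cnt_rm (red u) n HA Ha Hb Hc dab dac dbc) ra rb rc'.
have EB : forall n, bc A n = bc A' n + (~~ col && (ma %% 5 == n %% 5))
     + (~~ col && (mb %% 5 == n %% 5)) + (~~ col && (mc %% 5 == n %% 5)).
  by move=> n; rewrite /bc (cnt_rm (fun x => ~~ red u x) n HA Ha Hb Hc dab dac dbc) ra rb rc'.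
apply: IH.
- move=> i j ij; apply: mydisj => x; rewrite !inE => /andP [_ xi] /andP [_ xj].
  by rewrite (disjointFr (HA _ _ ij) xi) in xj.
- move=> n n5; have := Hsz n n5; rewrite !card_rb ER EB.
  clear -dab dac dbc; case: col => /=; lia.
- move=> n n5; have := HF n n5; rewrite /FA !ER !EB /ind.
  clear -dab dac dbc; case: col => /=; lia.
Qed.


Lemma cnt_true A n : cnt A (fun x => red u x == true) n = rc A n.
Proof. rewrite /rc /cnt; apply: eq_card => x; by rewrite !inE eqb_id. Qed.
Lemma cnt_false A n : cnt A (fun x => red u x == false) n = bc A n.
Proof. rewrite /bc /cnt; apply: eq_card => x; by rewrite !inE eqbF_neg. Qed.

Lemma Ai_ish_inord A j k : A (ish (inord (j %% 5)) k) = Ai A (j + k).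
Proof. rewrite Ai_ish inordK ?ltn_pmod //; apply: Ai_eq; by rewrite modnDml. Qed.

Lemma bad_red A j a b c : a \in Ai A j -> b \in Ai A j.+2 -> c \in Ai A j.+3 ->
  red u a = true -> red u b = true -> red u c = true -> bad_config red A u [set a; b; c].
Proof.
move=> Ha Hb Hc ra rb rc'; exists (inord (j %% 5)), a, b, c; split => //; left.
by rewrite !Ai_ish_inord addn2 addn3 ra rb rc'.
Qed.

Lemma bad_blue A j a b c : a \in Ai A j -> b \in Ai A j.+1 -> c \in Ai A j.+2 ->
  red u a = false -> red u b = false -> red u c = false -> bad_config red A u [set a; b; c].
Proof.
move=> Ha Hb Hc ra rb rc'; exists (inord (j %% 5)), a, b, c; split => //; right.
by rewrite !Ai_ish_inord addn1 addn2 ra rb rc'.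
Qed.

Lemma build s : IHprop s.
Proof.
elim: s => [|s IH] A HA Hsz HF.
  exists set0; split; first by rewrite cards0.
  split; first by apply/trivIsetP => B C; rewrite inE.
  by move=> S; rewrite inE.
apply: NNPP => Hno.
have E5 : rc A 5 = rc A 0 by [].
have E6 : rc A 6 = rc A 1 by [].
have E7 : rc A 7 = rc A 2 by [].
have E8 : rc A 8 = rc A 3 by [].
have B5 : bc A 5 = bc A 0 by [].
have B6 : bc A 6 = bc A 1 by [].
have B7 : bc A 7 = bc A 2 by [].
have B8 : bc A 8 = bc A 3 by [].
have F0 := HF 0 isT; have F1 := HF 1 isT; have F2 := HF 2 isT; have F3 := HF 3 isT; have F4 := HF 4 isT.
rewrite /FA ?E5 ?E6 ?E7 ?E8 ?B5 ?B6 ?B7 ?B8 in F0 F1 F2 F3 F4.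
have Z0 := Hsz 0 isT; have Z1 := Hsz 1 isT; have Z2 := Hsz 2 isT; have Z3 := Hsz 3 isT; have Z4 := Hsz 4 isT.
rewrite !card_rb in Z0 Z1 Z2 Z3 Z4.
apply: (@step (rc A 0) (rc A 1) (rc A 2) (rc A 3) (rc A 4) (bc A 0) (bc A 1) (bc A 2) (bc A 3) (bc A 4) s.+1) => //.
- move=> [? [? ?]]; rewrite leqNgt; apply/negP => lt; apply: Hno.
  apply: (@gen_case A s 0 2 3 true HA IH); rewrite ?cnt_true ?cnt_false ?E5 ?E6 ?E7 ?E8 ?B5 ?B6 ?B7 ?B8 //.
  + move=> a b c *; apply: bad_red; eassumption.
  + move=> [|[|[|[|[|n]]]]] // _; rewrite /ind /FA /= ?E5 ?E6 ?E7 ?E8 ?B5 ?B6 ?B7 ?B8; lia.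
- move=> [? [? ?]]; rewrite leqNgt; apply/negP => lt; apply: Hno.
  apply: (@gen_case A s 1 3 4 true HA IH); rewrite ?cnt_true ?cnt_false ?E5 ?E6 ?E7 ?E8 ?B5 ?B6 ?B7 ?B8 //.
  + move=> a b c *; apply: bad_red; eassumption.
  + move=> [|[|[|[|[|n]]]]] // _; rewrite /ind /FA /= ?E5 ?E6 ?E7 ?E8 ?B5 ?B6 ?B7 ?B8; lia.
- move=> [? [? ?]]; rewrite leqNgt; apply/negP => lt; apply: Hno.
  apply: (@gen_case A s 2 4 5 true HA IH); rewrite ?cnt_true ?cnt_false ?E5 ?E6 ?E7 ?E8 ?B5 ?B6 ?B7 ?B8 //.
  + move=> a b c *; apply: bad_red; eassumption.
  + move=> [|[|[|[|[|n]]]]] // _; rewrite /ind /FA /= ?E5 ?E6 ?E7 ?E8 ?B5 ?B6 ?B7 ?B8; lia.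
- move=> [? [? ?]]; rewrite leqNgt; apply/negP => lt; apply: Hno.
  apply: (@gen_case A s 3 5 6 true HA IH); rewrite ?cnt_true ?cnt_false ?E5 ?E6 ?E7 ?E8 ?B5 ?B6 ?B7 ?B8 //.
  + move=> a b c *; apply: bad_red; eassumption.
  + move=> [|[|[|[|[|n]]]]] // _; rewrite /ind /FA /= ?E5 ?E6 ?E7 ?E8 ?B5 ?B6 ?B7 ?B8; lia.
- move=> [? [? ?]]; rewrite leqNgt; apply/negP => lt; apply: Hno.
  apply: (@gen_case A s 4 6 7 true HA IH); rewrite ?cnt_true ?cnt_false ?E5 ?E6 ?E7 ?E8 ?B5 ?B6 ?B7 ?B8 //.
  + move=> a b c *; apply: bad_red; eassumption.
  + move=> [|[|[|[|[|n]]]]] // _; rewrite /ind /FA /= ?E5 ?E6 ?E7 ?E8 ?B5 ?B6 ?B7 ?B8; lia.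
- move=> [? [? ?]]; rewrite leqNgt; apply/negP => lt; apply: Hno.
  apply: (@gen_case A s 0 1 2 false HA IH); rewrite ?cnt_true ?cnt_false ?E5 ?E6 ?E7 ?E8 ?B5 ?B6 ?B7 ?B8 //.
  + move=> a b c *; apply: bad_blue; eassumption.
  + move=> [|[|[|[|[|n]]]]] // _; rewrite /ind /FA /= ?E5 ?E6 ?E7 ?E8 ?B5 ?B6 ?B7 ?B8; lia.
- move=> [? [? ?]]; rewrite leqNgt; apply/negP => lt; apply: Hno.
  apply: (@gen_case A s 1 2 3 false HA IH); rewrite ?cnt_true ?cnt_false ?E5 ?E6 ?E7 ?E8 ?B5 ?B6 ?B7 ?B8 //.
  + move=> a b c *; apply: bad_blue; eassumption.
  + move=> [|[|[|[|[|n]]]]] // _; rewrite /ind /FA /= ?E5 ?E6 ?E7 ?E8 ?B5 ?B6 ?B7 ?B8; lia.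
- move=> [? [? ?]]; rewrite leqNgt; apply/negP => lt; apply: Hno.
  apply: (@gen_case A s 2 3 4 false HA IH); rewrite ?cnt_true ?cnt_false ?E5 ?E6 ?E7 ?E8 ?B5 ?B6 ?B7 ?B8 //.
  + move=> a b c *; apply: bad_blue; eassumption.
  + move=> [|[|[|[|[|n]]]]] // _; rewrite /ind /FA /= ?E5 ?E6 ?E7 ?E8 ?B5 ?B6 ?B7 ?B8; lia.
- move=> [? [? ?]]; rewrite leqNgt; apply/negP => lt; apply: Hno.
  apply: (@gen_case A s 3 4 5 false HA IH); rewrite ?cnt_true ?cnt_false ?E5 ?E6 ?E7 ?E8 ?B5 ?B6 ?B7 ?B8 //.
  + move=> a b c *; apply: bad_blue; eassumption.
  + move=> [|[|[|[|[|n]]]]] // _; rewrite /ind /FA /= ?E5 ?E6 ?E7 ?E8 ?B5 ?B6 ?B7 ?B8; lia.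
- move=> [? [? ?]]; rewrite leqNgt; apply/negP => lt; apply: Hno.
  apply: (@gen_case A s 4 5 6 false HA IH); rewrite ?cnt_true ?cnt_false ?E5 ?E6 ?E7 ?E8 ?B5 ?B6 ?B7 ?B8 //.
  + move=> a b c *; apply: bad_blue; eassumption.
  + move=> [|[|[|[|[|n]]]]] // _; rewrite /ind /FA /= ?E5 ?E6 ?E7 ?E8 ?B5 ?B6 ?B7 ?B8; lia.
Qed.

Definition W A (n : nat) : {set T} :=
  [set x in Ai A n.+2 | red u x] :|: [set x in Ai A n.+3 | red u x]
  :|: [set x in Ai A n.+1 | ~~ red u x] :|: [set x in Ai A n.+4 | ~~ red u x].

Lemma cardU_disj2 (X Y : {set T}) : (forall x, x \in X -> x \in Y -> False) ->
  #|X :|: Y| = #|X| + #|Y|.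
Proof. by move=> H; rewrite cardsU disjoint_setI0 ?cards0 ?subn0 //; apply: mydisj. Qed.

Lemma disj_U (X1 X2 Z : {set T}) : (forall x, x \in X1 -> x \in Z -> False) ->
  (forall x, x \in X2 -> x \in Z -> False) -> forall x, x \in X1 :|: X2 -> x \in Z -> False.
Proof. move=> H1 H2 x; rewrite inE => /orP []; eauto. Qed.

Lemma dPm A m1 m2 (p q : T -> bool) : disjA A -> m1 %% 5 != m2 %% 5 ->
  forall x, x \in [set x in Ai A m1 | p x] -> x \in [set x in Ai A m2 | q x] -> False.
Proof.
move=> HA Hm x; rewrite !inE => /andP [H1 _] /andP [H2 _].
by move: H2; rewrite (Ai_mem _ HA H1) (negbTE Hm).
Qed.

Lemma dPr A m1 m2 :
  forall x, x \in [set x in Ai A m1 | red u x] -> x \in [set x in Ai A m2 | ~~ red u x] -> False.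
Proof. by move=> x; rewrite !inE => /andP [_ ->] /andP []. Qed.

Lemma wcard A n : disjA A -> #|W A n| = FA A n.
Proof.
move=> HA; rewrite /W /FA /rc /bc /cnt.
have m23 : n.+2 %% 5 != n.+3 %% 5 by apply/eqP; lia.
have m14 : n.+1 %% 5 != n.+4 %% 5 by apply/eqP; lia.
rewrite cardU_disj2; last first.
  apply: disj_U; [apply: disj_U; [apply: dPr | apply: dPr] | exact: dPm].
rewrite cardU_disj2; last by apply: disj_U; apply: dPr.
by rewrite cardU_disj2; last by exact: dPm.
Qed.

Lemma meetW A S n : disjA A -> bad_config red A u S -> n < 5 ->
  exists x, x \in S /\ x \in W A n.
Proof.
move=> HA [j [a [b [c [-> H]]]]] n5.
suff : (a \in W A n) || (b \in W A n) || (c \in W A n).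
  by case/orP => [/orP [] | ] Hx; [exists a | exists b | exists c]; split => //; rewrite !inE eqxx ?orbT.
case: H => [[Ha [Hb [Hc [ra [rb rc']]]]] | [Ha [Hb [Hc [ra [rb rc']]]]]].
- rewrite Ai_ord in Ha; rewrite Ai_ish in Hb; rewrite Ai_ish in Hc.
  rewrite /W !inE !(Ai_mem _ HA Ha) !(Ai_mem _ HA Hb) !(Ai_mem _ HA Hc) ra rb rc' /=.
  case: j Ha Hb Hc => j j5 /= _ _ _.
  move: j5 n5; case: n => [|[|[|[|[|n]]]]] //; case: j => [|[|[|[|[|j]]]]] //.
- rewrite Ai_ord in Ha; rewrite Ai_ish in Hb; rewrite Ai_ish in Hc.
  rewrite /W !inE !(Ai_mem _ HA Ha) !(Ai_mem _ HA Hb) !(Ai_mem _ HA Hc) (negbTE ra) (negbTE rb) (negbTE rc') /=.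
  case: j Ha Hb Hc => j j5 /= _ _ _.
  move: j5 n5; case: n => [|[|[|[|[|n]]]]] //; case: j => [|[|[|[|[|j]]]]] //.
Qed.

Lemma lowb A t n : disjA A -> has_disjoint_bad red A u t -> n < 5 -> t <= FA A n.
Proof.
move=> HA [P [cP [tP bP]]] n5; rewrite -cP -wcard //.
pose g S := odflt u [pick x in S :&: W A n].
have gP : forall S, S \in P -> g S \in S :&: W A n.
  move=> S HS; rewrite /g; case: pickP => [x Hx | H0] //=.
  have [x [xS xW]] := meetW HA (bP _ HS) n5.
  by move: (H0 x); rewrite inE xS xW.
have inj : {in P &, injective g}.
  move=> S1 S2 H1 H2 E; apply/eqP; apply/negP => /negP ne.
  have D := trivIsetP tP S1 S2 H1 H2 ne.
  have := gP _ H1; have := gP _ H2; rewrite !inE E => /andP [x2 _] /andP [x1 _].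
  by rewrite (disjointFr D x1) in x2.
rewrite -(card_in_imset inj); apply: subset_leq_card; apply/subsetP => x /imsetP [S HS ->].
by have := gP S HS; rewrite inE => /andP [].
Qed.

Lemma sum5 (F : 'I_5 -> nat) : \sum_(k < 5) F k =
  F (@Ordinal 5 0 isT) + F (@Ordinal 5 1 isT) + F (@Ordinal 5 2 isT) + F (@Ordinal 5 3 isT) + F (@Ordinal 5 4 isT).
Proof.
rewrite !big_ord_recl big_ord0 addn0 !addnA.
by congr (F _ + F _ + F _ + F _ + F _); apply: val_inj.
Qed.

Lemma blowR A m1 m2 x y : pentagon_blowup red A -> x \in Ai A m1 -> y \in Ai A m2 ->
  m2 %% 5 = m1.+1 %% 5 -> red x y.
Proof.
move=> [_ Hc] Hx Hy E; have [H1 _] := Hc (inord (m1 %% 5)); apply: H1 => //.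
by rewrite Ai_ish_inord addn1 -(Ai_eq A E).
Qed.

Lemma blowB A m1 m2 x y : pentagon_blowup red A -> x \in Ai A m1 -> y \in Ai A m2 ->
  m2 %% 5 = m1.+2 %% 5 -> ~~ red x y.
Proof.
move=> [_ Hc] Hx Hy E; have [_ H2] := Hc (inord (m1 %% 5)); apply: H2 => //.
by rewrite Ai_ish_inord addn2 -(Ai_eq A E).
Qed.

Lemma PC0 (X Y : {set T}) (cond : T -> T -> bool) :
  (forall x y, x \in X -> y \in Y -> ~~ cond x y) -> #|[set p in setX X Y | cond p.1 p.2]| = 0.
Proof.
move=> H; apply/eqP; rewrite cards_eq0; apply/eqP/setP => -[x y]; rewrite !inE /=.
apply/negP => /andP [/andP [hx hy] h]; by move: (H _ _ hx hy); rewrite h.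
Qed.

Lemma PC1 (X Y : {set T}) (cond : T -> T -> bool) :
  (forall x y, x \in X -> y \in Y -> ~~ cond x y) ->
  #|[set p in setX (u |: X) Y | cond p.1 p.2]| = #|[set y in Y | cond u y]|.
Proof.
move=> H.
have -> : [set p in setX (u |: X) Y | cond p.1 p.2] = (fun y => (u, y)) @: [set y in Y | cond u y].
  apply/setP => -[x y]; rewrite !inE /=; apply/idP/idP.
  - case/andP => /andP [/orP [/eqP -> | hx] hy] h.
      by apply/imsetP; exists y => //; rewrite inE hy h.
    by move: (H _ _ hx hy); rewrite h.
  - case/imsetP => y' ; rewrite inE => /andP [hy h] [-> ->]; by rewrite eqxx hy h.
by rewrite card_imset // => y1 y2 [].
Qed.

Lemma PC2 (X Y : {set T}) (cond : T -> T -> bool) :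
  (forall x y, x \in X -> y \in Y -> ~~ cond x y) ->
  #|[set p in setX X (u |: Y) | cond p.1 p.2]| = #|[set x in X | cond x u]|.
Proof.
move=> H.
have -> : [set p in setX X (u |: Y) | cond p.1 p.2] = (fun x => (x, u)) @: [set x in X | cond x u].
  apply/setP => -[x y]; rewrite !inE /=; apply/idP/idP.
  - case/andP => /andP [hx /orP [/eqP -> | hy]] h.
      by apply/imsetP; exists x => //; rewrite inE hx h.
    by move: (H _ _ hx hy); rewrite h.
  - case/imsetP => x' ; rewrite inE => /andP [hx h] [-> ->]; by rewrite eqxx hx h.
by rewrite card_imset // => y1 y2 [].
Qed.

Lemma cnt_eq A p m n : m %% 5 = n %% 5 -> cnt A p m = cnt A p n.
Proof. by move=> E; rewrite /cnt (Ai_eq A E). Qed.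

Lemma nbw A (i : 'I_5) (B : 'I_5 -> {set T}) : pentagon_blowup red A ->
  (forall k, u \notin A k) -> (forall x y, red x y = red y x) ->
  (forall k : 'I_5, B k = if val k == 0 then u |: Ai A i else Ai A (i + k)) ->
  nb_wrong red B = FA A i.
Proof.
move=> HP Hu Hs HB.
rewrite /nb_wrong sum5 !HB /=.
rewrite (@PC1 _ _ (fun x y => ~~ red x y)); last first.
  move=> x y hx hy; rewrite negbK; apply: (blowR HP hx hy); lia.
rewrite (@PC1 _ _ red); last first.
  move=> x y hx hy; apply: (blowB HP hx hy); lia.
rewrite (@PC0 _ _ (fun x y => ~~ red x y)); last first.
  move=> x y hx hy; rewrite negbK; apply: (blowR HP hx hy); lia.
rewrite (@PC0 _ _ red); last first.
  move=> x y hx hy; apply: (blowB HP hx hy); lia.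
rewrite (@PC0 _ _ (fun x y => ~~ red x y)); last first.
  move=> x y hx hy; rewrite negbK; apply: (blowR HP hx hy); lia.
rewrite (@PC0 _ _ red); last first.
  move=> x y hx hy; apply: (blowB HP hx hy); lia.
rewrite (@PC0 _ _ (fun x y => ~~ red x y)); last first.
  move=> x y hx hy; rewrite negbK; apply: (blowR HP hx hy); lia.
rewrite (@PC2 _ _ red); last first.
  move=> x y hx hy; apply: (blowB HP hx hy); lia.
rewrite (@PC2 _ _ (fun x y => ~~ red x y)); last first.
  move=> x y hx hy; rewrite negbK; apply: (blowR HP hx hy); lia.
rewrite (@PC0 _ _ red); last first.
  move=> x y hx hy; apply: (blowB HP hx hy); lia.
have E1 : #|[set y in Ai A (i + (0 + 1) %% 5) | ~~ red u y]| = bc A i.+1.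
  change (cnt A (fun y => ~~ red u y) (i + (0 + 1) %% 5) = bc A i.+1); apply: cnt_eq; lia.
have E2 : #|[set y in Ai A (i + (0 + 2) %% 5) | red u y]| = rc A i.+2.
  change (cnt A (red u) (i + (0 + 2) %% 5) = rc A i.+2); apply: cnt_eq; lia.
have E3 : #|[set x in Ai A (i + 3) | red x u]| = rc A i.+3.
  rewrite /rc -(@cnt_eq _ _ (i + 3)); last lia.
  by rewrite /cnt; apply: eq_card => x; rewrite !inE Hs.
have E4 : #|[set x in Ai A (i + 4) | ~~ red x u]| = bc A i.+4.
  rewrite /bc -(@cnt_eq _ _ (i + 4)); last lia.
  by rewrite /cnt; apply: eq_card => x; rewrite !inE Hs.
rewrite E1 E2 E3 E4 /FA; lia.
Qed.

End Aux.

Unset Implicit Arguments.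

Theorem proposition7p11 (T : finType) (red : T -> T -> bool)
  (red_sym : forall x y, red x y = red y x)
  (u : T) (A : 'I_5 -> {set T}) (t : nat) :
  (forall i, u \notin A i) ->
  pentagon_blowup red A ->
  has_disjoint_bad red A u t ->
  ~ has_disjoint_bad red A u t.+1 ->
  (forall i, t < #|A i|) ->
  exists i : 'I_5,
    exactly_flips_away red
      (fun k : 'I_5 => if k == ord0 then u |: A i else A (ish i k)) t.
Proof.
move=> Hu HP Hbad Hnot Hsz.
have HA : disjA A := HP.1.2.
have Hne := HP.1.1.
have Hlow : forall n, n < 5 -> t <= FA red u A n.
  by move=> n n5; apply: (lowb HA Hbad n5).
have [n n5 En] : exists2 n, n < 5 & FA red u A n = t.
  apply: NNPP => Hno; apply: Hnot.
  apply: (@build T red u t.+1 A HA).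
  - by move=> m _; rewrite /Ai; apply: Hsz.
  - move=> m m5; rewrite ltn_neqAle Hlow // andbT; apply/eqP => E; apply: Hno; by exists m.
set i : 'I_5 := inord n.
have ival : (i : nat) = n by rewrite /i inordK.
have ish_inj : forall k l : 'I_5, k != l -> ish i k != ish i l.
  move=> k l kl; apply/negP => /eqP /(congr1 val) /= E.
  move: kl; rewrite -val_eqE /=; move: E (ltn_ord k) (ltn_ord l) (ltn_ord i).
  move: (k : nat) (l : nat) (i : nat) => k' l' i' E k5 l5 i5; apply/negP; rewrite negbK; apply/eqP; lia.
have ish0 : forall l : 'I_5, l != ord0 -> i != ish i l.
  move=> l l0; apply/negP => /eqP /(congr1 val) /= E.
  move: l0; rewrite -val_eqE /=; move: E (ltn_ord l) (ltn_ord i).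
  move: (l : nat) (i : nat) => l' i' E l5 i5; apply/negP; rewrite negbK; apply/eqP; lia.
exists i; split.
- split.
  + move=> k; case: ifP => _; last exact: Hne.
    by apply/set0Pn; exists u; rewrite !inE eqxx.
  + move=> k l kl; case: ifP => k0; case: ifP => l0.
    * by move: kl; rewrite (eqP k0) (eqP l0) eqxx.
    * apply: mydisj => x; rewrite !inE => /orP [/eqP -> | xi] xl.
        by move: (Hu (ish i l)); rewrite xl.
      have l0' : l != ord0 by rewrite l0.
      by rewrite (disjointFr (HA _ _ (ish0 _ l0')) xi) in xl.
    * apply: mydisj => x xk; rewrite !inE => /orP [/eqP E | xi].
        by move: (Hu (ish i k)); rewrite -E xk.
      have k0' : k != ord0 by rewrite k0.
      by rewrite (disjointFr (HA _ _ (ish0 _ k0')) xi) in xk.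
    * exact: HA _ _ (ish_inj _ _ kl).
- idtac.
  rewrite (@nbw T red u A i _ HP Hu red_sym) ival //.
  move=> k; case: k => [[|m] Hm] /=.
    by rewrite Ai_ord ival.
  by rewrite Ai_ish ival.
Qed.
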